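(* Let $P=(P_t)_{t\ge0}$ be a $C_0$-semigroup on $(C_\kappa(E),\tau_\kappa^{\mathscr M})$ consisting of convex increasing (not necessarily linear) operators, with generator $(L,D(L))$. Then for every $\varphi\in C_\kappa(E)$ the function $u\colon[0,\infty)\to C_\kappa(E)$, $u(t):=P_t\varphi$, is a $D(L)$-viscosity solution of $u'(t)=Lu(t)$ for $t>0$, with $u(0)=\varphi$.
   Context: Standing assumptions and notation. $E$ is a completely regular Hausdorff topological space such that (1) every compact subset of $E$ is metrizable, (2) the Borel $\sigma$-algebra $\mathscr B(E)$ equals the Baire $\sigma$-algebra of $E$, and (3) a function $\varphi\colon E\to\mathbb R$ is continuous if and only if its restriction to every compact subset of $E$ is continuous. $\kappa\colon E\to(0,\infty)$ is a continuous weight function. $C_\kappa(E)$ denotes the space of continuous $\varphi\colon E\to\mathbb R$ with $\|\varphi\|_\kappa:=\sup_{x\in E}|\kappa(x)\varphi(x)|<\infty$. For a sequence $(C_n)$ of compact subsets of $E$ and positive reals $a_n\to0$ let $p_{\kappa,(C_n),(a_n)}(\varphi):=\sup_{n}a_n\sup_{x\in C_n}|\kappa(x)\varphi(x)|$; the mixed topology $\tau_\kappa^{\mathscr M}$ is the locally convex topology on $C_\kappa(E)$ generated by these seminorms. A family $P=(P_t)_{t\ge0}$ of maps $C_\kappa(E)\to C_\kappa(E)$ is a semigroup if $P_0\varphi=\varphi$ and $P_sP_t\varphi=P_{s+t}\varphi$. It is a $C_0$-semigroup on $(C_\kappa(E),\tau_\kappa^{\mathscr M})$ if moreover (iii) for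 every $T\ge0$, $\varepsilon>0$ and every seminorm $p_{\kappa,(K_n),(a_n)}$ there exist a seminorm $p_{\kappa,(C_n),(b_n)}$ and $\delta>0$ such that $p_{\kappa,(K_n),(a_n)}(P_t\varphi_1-P_t\varphi_2)<\varepsilon$ for all $t\in[0,T]$ and all $\varphi_1,\varphi_2$ with $p_{\kappa,(C_n),(b_n)}(\varphi_1-\varphi_2)<\delta$; and (iv) $\lim_{t\to0}p_{\kappa,(K_n),(a_n)}(P_t\varphi-\varphi)=0$ for every $\varphi$ and seminorm. Its generator $L$: $D(L)$ is the set of $\varphi$ for which $\tau_\kappa^{\mathscr M}\text{-}\lim_{t\to0}(P_t\varphi-\varphi)/t$ exists, and $L\varphi$ is this limit. An operator $T$ on $C_\kappa(E)$ is increasing if $\varphi_1\le\varphi_2$ implies $T\varphi_1\le T\varphi_2$, and convex if $T(\lambda\varphi_1+(1-\lambda)\varphi_2)\le\lambda T\varphi_1+(1-\lambda)T\varphi_2$ for $\lambda\in[0,1]$. Viscosity solutions: for $L\colon D\to C_\kappa(E)$ with $D\subset C_\kappa(E)$ nonempty, a $\tau_\kappa^{\mathscr M}$-continuous $u\colon[0,\infty)\to C_\kappa(E)$ is a $D$-viscosity subsolution of $u'=Lu$ if for every $t>0$, $x\in E$ and every ($\tau_\kappa^{\mathscr M}$-)differentiable $\psi\colon(0,\infty)\to C_\kappa(E)$ with $\psi(t)\in D$, $\psi(t)(x)=u(t)(x)$ and $\psi(s)\ge u(s)$ for all $s>0$, one has $\psi'(t)(x)\le(L\psi(t))(x)$;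 supersolution analogously with $\psi(s)\le u(s)$ for all $s>0$ and $\psi'(t)(x)\ge(L\psi(t))(x)$; a viscosity solution is both. *)

(* Defs.v *)
From HB Require Import structures.
From mathcomp Require Import all_boot all_order all_algebra.
From mathcomp Require Import all_classical all_reals all_analysis.
Set Implicit Arguments. Unset Strict Implicit. Unset Printing Implicit Defensive.
Import Order.TTheory GRing.Theory Num.Theory.
Import numFieldNormedType.Exports.
Local Open Scope classical_set_scope.
Local Open Scope ring_scope.

Section Defs.
Variables (R : realType) (E : topologicalType).

Definition metrizable_subset (K : set E) : Prop :=
  exists d : E -> E -> R,
    [/\ (forall x y, K x -> K y -> 0 <= d x y),
        (forall x y, K x -> K y -> (d x y = 0 <-> x = y)),
        (forall x y, K x -> K y -> d x y = d y x),
        (forall x y z, K x -> K y -> K z -> d x z <= d x y + d y z) &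
        (forall A : set E, A `<=` K ->
           ((exists U : set E, open U /\ A = U `&` K) <->
            (forall x, A x -> exists2 e : R, 0 < e &
                forall y, K y -> d x y < e -> A y)))].

Definition borel_sets : set (set E) := smallest (sigma_algebra setT) open.

Definition baire_sets : set (set E) :=
  smallest (sigma_algebra setT)
    [set A | exists (f : E -> R) (B : set R),
               continuous f /\ open B /\ A = f @^-1` B].

Definition standing_assumptions : Prop :=
  [/\ completely_regular_space E,
      hausdorff_space E,
      (forall K : set E, compact K -> metrizable_subset K),
      borel_sets = baire_sets &
      (forall f : E -> R,
          continuous f <-> (forall K : set E, compact K -> {within K, continuous f}))].

Variable kappa : E -> R.

Definition weight : Prop := continuous kappa /\ (forall x, 0 < kappa x).

Definition Ck (phi : E -> R) : Prop :=
  continuous phi /\ exists M : R, forall x, `|kappa x * phi x| <= M.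

(* p_{kappa,(C_n),(a_n)}(phi) = sup_n a_n sup_{x in C_n} |kappa x phi x|
   (as a sup of nonnegative numbers, with the convention sup of empty = 0). *)
Definition pmix (C : nat -> set E) (a : nat -> R) (phi : E -> R) : \bar R :=
  ereal_sup ([set e | exists n x, C n x /\ e = (a n * `|kappa x * phi x|)%:E]
             `|` [set 0%E]).

Definition adm (C : nat -> set E) (a : nat -> R) : Prop :=
  [/\ (forall n, compact (C n)), (forall n, 0 < a n) & a @ \oo --> (0 : R)].

Definition mconv (F : set_system R) (f : R -> E -> R) (l : E -> R) : Prop :=
  forall C a, adm C a -> (fun t => pmix C a (fun x => f t x - l x)) @ F --> 0%E.

Definition is_semigroup (P : R -> (E -> R) -> (E -> R)) : Prop :=
  [/\ (forall t phi, 0 <= t -> Ck phi -> Ck (P t phi)),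
      (forall phi, Ck phi -> P 0 phi = phi) &
      (forall s t phi, 0 <= s -> 0 <= t -> Ck phi -> P s (P t phi) = P (s + t) phi)].

Definition C0_semigroup (P : R -> (E -> R) -> (E -> R)) : Prop :=
  [/\ is_semigroup P,
      (forall (T eps : R), 0 <= T -> 0 < eps -> forall K a, adm K a ->
         exists C b (delta : R), [/\ adm C b, 0 < delta &
           forall t phi1 phi2, 0 <= t <= T -> Ck phi1 -> Ck phi2 ->
             (pmix C b (fun x => (phi1 x - phi2 x)%R) < delta%:E)%E ->
             (pmix K a (fun x => (P t phi1 x - P t phi2 x)%R) < eps%:E)%E]) &
      (forall phi, Ck phi -> mconv (0^'+) (fun t => P t phi) phi)].

Definition increasing_op (T : (E -> R) -> (E -> R)) : Prop :=
  forall phi1 phi2, Ck phi1 -> Ck phi2 -> (forall x, phi1 x <= phi2 x) ->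
    forall x, T phi1 x <= T phi2 x.

Definition convex_op (T : (E -> R) -> (E -> R)) : Prop :=
  forall phi1 phi2 (lam : R), Ck phi1 -> Ck phi2 -> 0 <= lam <= 1 ->
    forall x, T (fun y => lam * phi1 y + (1 - lam) * phi2 y) x
              <= lam * T phi1 x + (1 - lam) * T phi2 x.

Definition is_gen_limit (P : R -> (E -> R) -> (E -> R)) (phi l : E -> R) : Prop :=
  Ck phi /\ Ck l /\ mconv (0^'+) (fun t x => (P t phi x - phi x) / t) l.

Definition gen_dom (P : R -> (E -> R) -> (E -> R)) : set (E -> R) :=
  [set phi | exists l, is_gen_limit P phi l].

(* L phi := the (unique, tau^M is Hausdorff) limit *)
Definition gen (P : R -> (E -> R) -> (E -> R)) (phi : E -> R) : E -> R :=
  get (is_gen_limit P phi).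

Definition is_mderiv (psi : R -> E -> R) (t : R) (d : E -> R) : Prop :=
  Ck d /\ mconv (0^') (fun h x => (psi (t + h) x - psi t x) / h) d.

Definition mdifferentiable (psi : R -> E -> R) : Prop :=
  forall s, 0 < s -> Ck (psi s) /\ exists d, is_mderiv psi s d.

Definition mderiv (psi : R -> E -> R) (t : R) : E -> R := get (is_mderiv psi t).

Definition mcontinuous0 (u : R -> E -> R) : Prop :=
  (forall t, 0 <= t -> Ck (u t)) /\
  forall s : R, 0 <= s -> mconv (within [set t : R | 0 <= t] (nbhs s)) u (u s).

Definition visc_sub (D : set (E -> R)) (L : (E -> R) -> (E -> R)) (u : R -> E -> R) :=
  mcontinuous0 u /\
  forall t x psi, 0 < t -> mdifferentiable psi -> D (psi t) -> psi t x = u t x ->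
    (forall s, 0 < s -> forall y, u s y <= psi s y) ->
    mderiv psi t x <= L (psi t) x.

Definition visc_super (D : set (E -> R)) (L : (E -> R) -> (E -> R)) (u : R -> E -> R) :=
  mcontinuous0 u /\
  forall t x psi, 0 < t -> mdifferentiable psi -> D (psi t) -> psi t x = u t x ->
    (forall s, 0 < s -> forall y, psi s y <= u s y) ->
    L (psi t) x <= mderiv psi t x.

Definition visc_sol D L u := visc_sub D L u /\ visc_super D L u.

End Defs.

(* Main.v *)
Require Import Defs.
From HB Require Import structures.
From mathcomp Require Import all_boot all_order all_algebra.
From mathcomp Require Import all_classical all_reals all_analysis.
From mathcomp Require Import ring lra.
Import Order.TTheory GRing.Theory Num.Theory.
Import numFieldNormedType.Exports.
Local Open Scope classical_set_scope.
Local Open Scope ring_scope.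

Lemma pmix_pt {R : realType} {E : topologicalType} (kappa : E -> R) C a f n x :
  C n x -> ((a n * `|kappa x * f x|)%:E <= pmix kappa C a f)%E.
Proof.
move=> Cx; apply: ereal_sup_ubound; left; by exists n, x.
Qed.

Lemma pmix_ge0 {R : realType} {E : topologicalType} (kappa : E -> R) C a f :
  (0 <= pmix kappa C a f)%E.
Proof. by apply: ereal_sup_ubound; right. Qed.

Lemma pmix_ext {R : realType} {E : topologicalType} (kappa : E -> R) C a f g :
  (forall x, `|f x| = `|g x|) -> pmix kappa C a f = pmix kappa C a g.
Proof.
move=> H; rewrite /pmix; congr ereal_sup; congr setU.
apply/funext=> e; apply/propext; split; case=> n [y [Hy ->]]; exists n, y;
  by rewrite !normrM H.
Qed.

Lemma pmix0 {R : realType} {E : topologicalType} (kappa : E -> R) C a f :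
  (forall x, f x = 0) -> pmix kappa C a f = 0%E.
Proof.
move=> H; apply/eqP; rewrite eq_le pmix_ge0 andbT.
apply: ge_ereal_sup => e [[n [y [_ ->]]]|->] //.
by rewrite H mulr0 normr0 mulr0.
Qed.

Lemma cvg0_lt (R : realType) {T} (F : set_system T) {FF : Filter F} (g : T -> \bar R) :
  (forall t, 0 <= g t)%E ->
  (g @ F --> 0%E <-> forall e : R, 0 < e -> \forall t \near F, (g t < e%:E)%E).
Proof.
move=> g0; split.
- move=> /fine_cvgP [Hfin /cvgr0Pnorm_lt Hc] e e0.
  apply: filterS2 Hfin (Hc e e0) => t /= Hf h.
  rewrite -(fineK Hf) lte_fin; exact: le_lt_trans (ler_norm _) h.
- move=> H; apply/fine_cvgP; split.
  + near=> t. rewrite ge0_fin_numE //.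
    have : (g t < 1%:E)%E by near: t; apply: H.
    by move=> h; exact: lt_le_trans h (leey _).
  + apply/cvgr0Pnorm_lt => e e0; near=> t.
    have h : (g t < e%:E)%E by near: t; apply: H.
    have Hf : g t \is a fin_num by rewrite ge0_fin_numE //; exact: lt_le_trans h (leey _).
    rewrite /= ger0_norm; last by rewrite -lee_fin fineK.
    by rewrite -lte_fin fineK.
Unshelve. all: by end_near.
Qed.

Lemma mconv_pt {R : realType} {E : topologicalType} (kappa : E -> R)
  (F : set_system R) {FF : Filter F} (f : R -> E -> R) l x :
  0 < kappa x -> mconv kappa F f l ->
  forall e, 0 < e -> \forall t \near F, `|f t x - l x| < e.
Proof.
move=> k0 H e e0.
have ad : adm (fun _ : nat => [set x]) (@harmonic R).
  split => //; [move=> n; exact: compact_set1|move=> n; exact: harmonic_gt0|exact: cvg_harmonic].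
have := (@cvg0_lt R R F FF _ (fun t => pmix_ge0 kappa _ _ _)).1 (H _ _ ad) (e * kappa x) (mulr_gt0 e0 k0).
apply: filterS => t h.
have := pmix_pt kappa (fun _ => [set x]) (@harmonic R) (fun y => f t y - l y) 0 x erefl.
move=> /le_lt_trans /(_ h); rewrite lte_fin /= invr1 mul1r normrM (gtr0_norm k0).
by rewrite mulrC ltr_pM2r.
Qed.

Lemma near_at_right {R : realType} {Q : R -> Prop} :
  (\forall h \near 0^'+, Q h) -> exists2 eta : R, 0 < eta & forall h, 0 < h < eta -> Q h.
Proof.
rewrite /at_right /within /= => /nbhs_ballP [eta eta0 H].
exists eta => // h /andP [h0 he]; apply: H => //.
by rewrite /ball /= sub0r normrN gtr0_norm.
Qed.

Lemma near_dnbhs0 {R : realType} {Q : R -> Prop} :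
  (\forall h \near 0^', Q h) -> exists2 eta : R, 0 < eta & forall h, h != 0 -> `|h| < eta -> Q h.
Proof.
rewrite /dnbhs /within /= => /nbhs_ballP [eta eta0 H].
exists eta => // h h0 he; apply: H => //.
by rewrite /ball /= sub0r normrN.
Qed.

Lemma to_near_within (R : realType) (A : set R) (s : R) (Q : R -> Prop) :
  (exists2 eta : R, 0 < eta & forall t, A t -> `|t - s| < eta -> Q t) ->
  (within A (nbhs s) : set_system R) Q.
Proof.
move=> [eta eta0 H]; rewrite /within /=; apply/nbhs_ballP; exists eta => // t /= Bt At.
apply: H => //; by rewrite /ball /= distrC in Bt.
Qed.

Lemma Ck_lin {R : realType} {E : topologicalType} (kappa : E -> R) f g (al be : R) :
  Ck kappa f -> Ck kappa g -> Ck kappa (fun y => al * f y + be * g y).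
Proof.
move=> [cf [M1 H1]] [cg [M2 H2]]; split.
  move=> y; apply: cvgD; apply: cvgMr; [exact: cf|exact: cg].
exists (`|al| * M1 + `|be| * M2) => y.
rewrite mulrDr (mulrCA (kappa y) al) (mulrCA (kappa y) be).
apply: le_trans (ler_normD _ _) _.
by rewrite (normrM al) (normrM be); apply: lerD; apply: ler_wpM2l.
Qed.

Lemma Ck_ext {R : realType} {E : topologicalType} (kappa : E -> R) f g :
  (forall y, f y = g y) -> Ck kappa f -> Ck kappa g.
Proof. by move=> H; have -> : f = g by apply/funext. Qed.

Lemma u_cont {R : realType} {E : topologicalType} (kappa : E -> R) P phi :
  C0_semigroup kappa P -> Ck kappa phi -> mcontinuous0 kappa (fun t => P t phi).
Proof.
case=> [[HCk HP0 HPP] Heq Hsc] Cphi; split; first by move=> t t0; exact: HCk.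
move=> s s0 K a adK.
apply/(@cvg0_lt R R _ _ _ (fun t => pmix_ge0 kappa _ _ _)) => e e0.
have [C [b [del [adC del0 Heq']]]] := Heq (s+1) e (addr_ge0 s0 ler01) e0 K a adK.
have := (@cvg0_lt R R 0^'+ (at_right_proper_filter 0) _ (fun t => pmix_ge0 kappa _ _ _)).1 (Hsc phi Cphi C b adC) del del0.
move=> Hn; have [eta eta0 Heta] := near_at_right Hn.
have key : forall h, 0 <= h -> h < eta ->
    (pmix kappa C b (fun x => (P h phi x - phi x)%R) < del%:E)%E.
  move=> h; rewrite le_eqVlt => /orP [/eqP <- _|h0 he]; last by apply: Heta; rewrite h0 he.
  by rewrite HP0 // pmix0 ?lte_fin // => x; rewrite subrr.
apply: to_near_within; exists (Num.min eta 1) => [|t /= t0]; first by rewrite lt_min eta0 ltr01.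
rewrite lt_min => /andP [Hte Ht1].
case: (leP s t) => st.
- have -> : P t phi = P s (P (t - s) phi) by rewrite HPP ?subr_ge0 // addrC subrK.
  apply: Heq' => //; first by rewrite s0 lerDl ler01.
  + by apply: HCk; rewrite ?subr_ge0.
  + by apply: key; rewrite ?subr_ge0 // -(ger0_norm (x := t - s)) // subr_ge0.
- have -> : P s phi = P t (P (s - t) phi) by rewrite HPP ?subr_ge0 ?(ltW st) // addrC subrK.
  rewrite (@pmix_ext R E kappa K a _ (fun x => P t (P (s - t) phi) x - P t phi x)); last by move=> x; rewrite distrC.
  apply: Heq' => //; first by rewrite t0 (le_trans (ltW st)) // lerDl ler01.
  + by apply: HCk; rewrite ?subr_ge0 ?(ltW st).
  + by apply: key; rewrite ?subr_ge0 ?(ltW st) // -(ger0_norm (x := s - t)) ?subr_ge0 ?(ltW st) // distrC.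
Qed.

Lemma adm_x {R : realType} {E : topologicalType} (x : E) :
  adm (fun _ : nat => [set x]) (@harmonic R).
Proof.
split => //; [move=> n; exact: compact_set1|move=> n; exact: harmonic_gt0|exact: cvg_harmonic].
Qed.

Lemma pmix_x_lt {R : realType} {E : topologicalType} (kappa : E -> R) x f e :
  0 < kappa x ->
  (pmix kappa (fun _ => [set x]) (@harmonic R) f < (e * kappa x)%:E)%E -> `|f x| < e.
Proof.
move=> k0 h.
have := pmix_pt kappa (fun _ => [set x]) (@harmonic R) f 0 x erefl.
move=> /le_lt_trans /(_ h); rewrite lte_fin /= invr1 mul1r normrM (gtr0_norm k0).
by rewrite mulrC ltr_pM2r.
Qed.

Lemma to_near_at_right {R : realType} (Q : R -> Prop) :
  (exists2 eta : R, 0 < eta & forall h, 0 < h < eta -> Q h) -> \forall h \near 0^'+, Q h.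
Proof.
move=> [eta eta0 H]; rewrite /at_right /within /=; apply/nbhs_ballP; exists eta => // h /= Bh h0.
apply: H; rewrite h0 /=; by rewrite /ball /= sub0r normrN gtr0_norm in Bh.
Qed.

Lemma Pconv {R : realType} {E : topologicalType} (kappa : E -> R) P V v x :
  C0_semigroup kappa P -> 0 < kappa x -> Ck kappa v ->
  (\forall h \near 0^'+, Ck kappa (V h)) -> mconv kappa (0^'+) V v ->
  forall e, 0 < e -> \forall h \near 0^'+, `|P h (V h) x - v x| < e.
Proof.
move=> [[HCk HP0 HPP] Heq Hsc] k0 Cv CV HV e e0.
have e20 : 0 < e / 2 by rewrite divr_gt0.
have [C [b [del [adC del0 Heq']]]] :=
  Heq 1 (e / 2 * kappa x) ler01 (mulr_gt0 e20 k0) _ _ (adm_x x).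
have F1 := (@cvg0_lt R R 0^'+ (at_right_proper_filter 0) _ (fun t => pmix_ge0 kappa _ _ _)).1 (HV C b adC) del del0.
have F2 := @mconv_pt R E kappa 0^'+ (at_right_proper_filter 0) _ _ x k0 (Hsc v Cv) _ e20.
have F3 : \forall h \near (0 : R)^'+, h <= 1.
  by apply: (@to_near_at_right R (fun h : R => h <= 1)); exists 1 => // h /andP [_ /ltW].
near=> h.
have h1 : h <= 1 by near: h.
have h0 : 0 < h by near: h; exact: nbhs_right_gt.
have H1 : `|P h (V h) x - P h v x| < e / 2.
  apply: (@pmix_x_lt R E kappa x (fun y => P h (V h) y - P h v y) (e / 2) k0); apply: Heq' => //.
  - by rewrite (ltW h0) h1.
  - by near: h.
  - by near: h.
have H2 : `|P h v x - v x| < e / 2 by near: h.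
have -> : P h (V h) x - v x = (P h (V h) x - P h v x) + (P h v x - v x) by rewrite addrA subrK.
by apply: le_lt_trans (ler_normD _ _) _; rewrite [e]splitr; apply: ltrD.
Unshelve. all: by end_near.
Qed.

Lemma deriv_back {R : realType} {E : topologicalType} (kappa : E -> R) psi t d (sg : R) :
  `|sg| = 1 -> is_mderiv kappa psi t d ->
  mconv kappa ((0 : R)^'+) (fun h y => psi t y + sg * ((psi (t - h) y - psi t y) / h))
    (fun y => psi t y - sg * d y).
Proof.
move=> hs [Cd Hd] C b adC.
apply/(@cvg0_lt R R ((0 : R)^'+) (at_right_proper_filter 0) _ (fun t => pmix_ge0 kappa _ _ _)) => e e0.
have := (@cvg0_lt R R ((0 : R)^') (Proper_dnbhs_numFieldType (0:R)) _ (fun t => pmix_ge0 kappa _ _ _)).1 (Hd C b adC) e e0.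
move=> Hn; have [eta eta0 H] := near_dnbhs0 Hn.
apply: to_near_at_right; exists eta => // h /andP [h0 he].
rewrite (@pmix_ext R E kappa C b _ (fun y => (psi (t + - h) y - psi t y) / - h - d y)).
  by apply: H; rewrite ?oppr_eq0 ?normrN ?gtr0_norm // gt_eqF.
move=> y.
have -> : psi t y + sg * ((psi (t - h) y - psi t y) / h) - (psi t y - sg * d y)
  = (- sg) * ((psi (t + - h) y - psi t y) / - h - d y) by rewrite invrN; ring.
by rewrite normrM normrN hs mul1r.
Qed.

Lemma sub_part {R : realType} {E : topologicalType} (kappa : E -> R) P phi t x psi :
  C0_semigroup kappa P ->
  (forall t, 0 <= t -> increasing_op kappa (P t) /\ convex_op kappa (P t)) ->
  weight kappa -> Ck kappa phi -> 0 < t -> mdifferentiable kappa psi ->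
  gen_dom kappa P (psi t) -> psi t x = P t phi x ->
  (forall s, 0 < s -> forall y, P s phi y <= psi s y) ->
  mderiv kappa psi t x <= gen kappa P (psi t) x.
Proof.
move=> HC Hic [_ kpos] Cphi t0 Hpsi Hdom Heqx Hle.
have HC' := HC; case: HC' => [[HCk HP0 HPP] Heq Hsc].
have [Ca [d0 Hd0]] := Hpsi t t0.
have Hd : is_mderiv kappa psi t (mderiv kappa psi t) := getPex (ex_intro _ d0 Hd0).
have Hl : is_gen_limit kappa P (psi t) (gen kappa P (psi t)) := getPex Hdom.
move: Hd Hl; set d := mderiv kappa psi t; set l := gen kappa P (psi t) => Hd Hl.
case: Hl => [_ [Cl Hl]].
have k0 := kpos x.
have HV := @deriv_back R E kappa psi t d 1 (normr1 R) Hd.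
set V := (fun h y => psi t y + 1 * ((psi (t - h) y - psi t y) / h)) in HV.
set v := (fun y => psi t y - 1 * d y) in HV.
have Cd : Ck kappa d := Hd.1.
have Cv : Ck kappa v.
  apply: (@Ck_ext R E kappa _ _ _ (Ck_lin kappa (psi t) d 1 (-1) Ca Cd)) => y; rewrite /v; ring.
have CV : \forall h \near (0 : R)^'+, Ck kappa (V h).
  apply: (@to_near_at_right R (fun h => Ck kappa (V h))); exists t => // h /andP [h0 ht].
  have Cb := (Hpsi (t - h) (ltac:(by rewrite subr_gt0))).1.
  apply: (@Ck_ext R E kappa _ _ _ (Ck_lin kappa (psi t) (psi (t - h)) (1 - h^-1) (h^-1) Ca Cb)) => y.
  rewrite /V; ring.
apply/ler_addgt0Pr => e e0.
have e3 : 0 < e / 3 by rewrite divr_gt0.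
have F1 := @mconv_pt R E kappa _ (at_right_proper_filter 0) _ _ x k0 Hl _ e3.
have F2 := @Pconv R E kappa P V v x HC k0 Cv CV HV _ e3.
have F3 := @mconv_pt R E kappa _ (at_right_proper_filter 0) _ _ x k0 (Hsc _ Ca) _ e3.
have F4 : \forall h \near (0 : R)^'+, 0 < h < Num.min t 1.
  apply: (@to_near_at_right R (fun h => 0 < h < Num.min t 1)); exists (Num.min t 1) => //.
  by rewrite lt_min t0 ltr01.
have [h [[[H1 H2] H3] H4]] := @filter_ex _ _ (at_right_proper_filter (0 : R)) _
  (filterI (filterI (filterI F1 F2) F3) F4).
move: H1 H2 H3 H4 => /= H1 H2 H3 /andP [h0]; rewrite lt_min => /andP [ht h1].
have Cb := (Hpsi (t - h) (ltac:(by rewrite subr_gt0))).1.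
have Cu : Ck kappa (P (t - h) phi) by apply: HCk => //; rewrite subr_ge0 ltW.
have Iu : P t phi x <= P h (psi (t - h)) x.
  have -> : P t phi = P h (P (t - h) phi).
    by rewrite HPP ?(ltW h0) ?subr_ge0 ?(ltW ht) // addrC subrK.
  apply: (Hic h (ltW h0)).1 => // y; apply: Hle; by rewrite subr_gt0.
have CVh : Ck kappa (V h).
  apply: (@Ck_ext R E kappa _ _ _ (Ck_lin kappa (psi t) (psi (t - h)) (1 - h^-1) (h^-1) Ca Cb)) => y.
  rewrite /V; ring.
have Ic := (Hic h (ltW h0)).2 (V h) (psi t) h CVh Ca (ltac:(by rewrite (ltW h0) (ltW h1))) x.
have EV : (fun y => h * V h y + (1 - h) * psi t y) = psi (t - h).
  apply/funext => y; rewrite /V; field; by rewrite gt_eqF.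
rewrite EV in Ic.
have main : 0 <= (P h (V h) x - P h (psi t) x) + (P h (psi t) x - psi t x) / h.
  have -> : (P h (V h) x - P h (psi t) x) + (P h (psi t) x - psi t x) / h
    = (h * P h (V h) x + (1 - h) * P h (psi t) x - psi t x) / h by field; rewrite gt_eqF.
  apply: divr_ge0; last exact: ltW.
  rewrite subr_ge0 Heqx; exact: le_trans Iu Ic.
move: H1 H2 H3; rewrite /v !ltr_norml => /andP [H1 H1'] /andP [H2 H2'] /andP [H3 H3'].
lra.
Qed.

Lemma super_part {R : realType} {E : topologicalType} (kappa : E -> R) P phi t x psi :
  C0_semigroup kappa P ->
  (forall t, 0 <= t -> increasing_op kappa (P t) /\ convex_op kappa (P t)) ->
  weight kappa -> Ck kappa phi -> 0 < t -> mdifferentiable kappa psi ->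
  gen_dom kappa P (psi t) -> psi t x = P t phi x ->
  (forall s, 0 < s -> forall y, psi s y <= P s phi y) ->
  gen kappa P (psi t) x <= mderiv kappa psi t x.
Proof.
move=> HC Hic [_ kpos] Cphi t0 Hpsi Hdom Heqx Hle.
have HC' := HC; case: HC' => [[HCk HP0 HPP] Heq Hsc].
have [Ca [d0 Hd0]] := Hpsi t t0.
have Hd : is_mderiv kappa psi t (mderiv kappa psi t) := getPex (ex_intro _ d0 Hd0).
have Hl : is_gen_limit kappa P (psi t) (gen kappa P (psi t)) := getPex Hdom.
move: Hd Hl; set d := mderiv kappa psi t; set l := gen kappa P (psi t) => Hd Hl.
case: Hl => [_ [Cl Hl]].
have k0 := kpos x.
have HV := @deriv_back R E kappa psi t d (-1) (normrN1 R) Hd.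
set V := (fun h y => psi t y + -1 * ((psi (t - h) y - psi t y) / h)) in HV.
set v := (fun y => psi t y - -1 * d y) in HV.
have Cd : Ck kappa d := Hd.1.
have Cv : Ck kappa v.
  apply: (@Ck_ext R E kappa _ _ _ (Ck_lin kappa (psi t) d 1 1 Ca Cd)) => y; rewrite /v; ring.
have CV : \forall h \near (0 : R)^'+, Ck kappa (V h).
  apply: (@to_near_at_right R (fun h => Ck kappa (V h))); exists t => // h /andP [h0 ht].
  have Cb := (Hpsi (t - h) (ltac:(by rewrite subr_gt0))).1.
  apply: (@Ck_ext R E kappa _ _ _ (Ck_lin kappa (psi t) (psi (t - h)) (1 + h^-1) (- h^-1) Ca Cb)) => y.
  rewrite /V; ring.
apply/ler_addgt0Pr => e e0.
have e3 : 0 < e / 3 by rewrite divr_gt0.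
have F1 := @mconv_pt R E kappa _ (at_right_proper_filter 0) _ _ x k0 Hl _ e3.
have F2 := @Pconv R E kappa P V v x HC k0 Cv CV HV _ e3.
have F3 := @mconv_pt R E kappa _ (at_right_proper_filter 0) _ _ x k0 (Hsc _ Ca) _ e3.
have F4 : \forall h \near (0 : R)^'+, 0 < h < t.
  by apply: (@to_near_at_right R (fun h => 0 < h < t)); exists t.
have [h [[[H1 H2] H3] H4]] := @filter_ex _ _ (at_right_proper_filter (0 : R)) _
  (filterI (filterI (filterI F1 F2) F3) F4).
move: H1 H2 H3 H4 => /= H1 H2 H3 /andP [h0 ht].
have h1 : 0 < 1 + h by rewrite addr_gt0.
have Cb := (Hpsi (t - h) (ltac:(by rewrite subr_gt0))).1.
have Cu : Ck kappa (P (t - h) phi) by apply: HCk => //; rewrite subr_ge0 ltW.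
have Iu : P h (psi (t - h)) x <= P t phi x.
  have -> : P t phi = P h (P (t - h) phi).
    by rewrite HPP ?(ltW h0) ?subr_ge0 ?(ltW ht) // addrC subrK.
  apply: (Hic h (ltW h0)).1 => // y; apply: Hle; by rewrite subr_gt0.
have CVh : Ck kappa (V h).
  apply: (@Ck_ext R E kappa _ _ _ (Ck_lin kappa (psi t) (psi (t - h)) (1 + h^-1) (- h^-1) Ca Cb)) => y.
  rewrite /V; ring.
have lam01 : 0 <= (1 + h)^-1 <= 1.
  by rewrite invr_ge0 (ltW h1) /= invf_le1 // lerDl ltW.
have Ic := (Hic h (ltW h0)).2 (psi (t - h)) (V h) ((1 + h)^-1) Cb CVh lam01 x.
have EV : (fun y => (1 + h)^-1 * psi (t - h) y + (1 - (1 + h)^-1) * V h y) = psi t.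
  apply/funext => y; rewrite /V; field; by rewrite !gt_eqF.
rewrite EV in Ic.
have Ic2 : (1 + h) * P h (psi t) x <= P h (psi (t - h)) x + h * P h (V h) x.
  have -> : P h (psi (t - h)) x + h * P h (V h) x = (1 + h) *
     ((1 + h)^-1 * P h (psi (t - h)) x + (1 - (1 + h)^-1) * P h (V h) x)
    by field; rewrite gt_eqF.
  by apply: ler_wpM2l => //; rewrite ltW.
have main : (P h (psi t) x - psi t x) / h <= P h (V h) x - P h (psi t) x.
  rewrite ler_pdivrMr // Heqx; lra.
move: H1 H2 H3; rewrite /v !ltr_norml => /andP [H1 H1'] /andP [H2 H2'] /andP [H3 H3'].
lra.
Qed.

Theorem theorem6p2 (R : realType) (E : topologicalType) (kappa : E -> R)
  (P : R -> (E -> R) -> (E -> R)) :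
  standing_assumptions R E ->
  weight kappa ->
  C0_semigroup kappa P ->
  (forall t, 0 <= t -> increasing_op kappa (P t) /\ convex_op kappa (P t)) ->
  forall phi, Ck kappa phi ->
    visc_sol kappa (gen_dom kappa P) (gen kappa P) (fun t => P t phi)
    /\ P 0 phi = phi.
Proof.
move=> Hstd Hw HC Hic phi Cphi.
have HC' := HC; case: HC' => [[HCk HP0 HPP] _ _].
split; last exact: HP0.
have Hc := u_cont kappa P phi HC Cphi.
split; split => //.
- move=> t x psi t0 Hpsi Hdom Heqx Hle.
  exact: (sub_part kappa P phi t x psi HC Hic Hw Cphi t0 Hpsi Hdom Heqx Hle).
- move=> t x psi t0 Hpsi Hdom Heqx Hle.
  exact: (super_part kappa P phi t x psi HC Hic Hw Cphi t0 Hpsi Hdom Heqx Hle).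
Qed.
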